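(* Let $q$ be a prime power, $k\ge 2$, $m,n$ positive integers, and let $\mathcal C$ be a nondegenerate $[n,k]_{q^m/q}$ code with generalized rank weights $(d_1,\ldots,d_k)$. Then $\mathcal C$ is minimal if and only if $d_2\ge m+1$.
   Context: An $[n,k]_{q^m/q}$ code is a $k$-dimensional $\mathbb F_{q^m}$-subspace of $\mathbb F_{q^m}^n$ endowed with the rank metric. For $v=(v_1,\ldots,v_n)\in\mathbb F_{q^m}^n$, its rank weight is $\dim_{\mathbb F_q}\langle v_1,\ldots,v_n\rangle_{\mathbb F_q}=r$; if $u=(u_1,\ldots,u_r)$ is an $\mathbb F_q$-basis of $\langle v_1,\ldots,v_n\rangle_{\mathbb F_q}$ and $v=uA$ with $A\in\mathbb F_q^{r\times n}$, the rank support of $v$ is $\mathrm{supp}(v)=$ the $\mathbb F_q$-row space of $A$ (independent of the choice of $u$). A nonzero codeword $v\in\mathcal C$ is minimal if for every $u\in\mathcal C$: $\mathrm{supp}(u)\subseteq\mathrm{supp}(v)$ iff $u=\lambda v$ for some $\lambda\in\mathbb F_{q^m}$; $\mathcal C$ is minimal if all its nonzero codewords are minimal. An $\mathbb F_{q^m}$-subspace $\mathcal A\subseteq\mathbb F_{q^m}^n$ is Galois closed if it is mapped to itself by the coordinatewise $q$-Frobenius map. The $j$-th generalized rank weight is $d_j=\min\{\dim_{\mathbb F_{q^m}}\mathcal A: \mathcal A \text{ Galois closed}, \dim_{\mathbb F_{q^m}}(\mathcal A\cap\mathcal C)\ge j\}$. $\mathcal C$ is nondegenerate if $d_k=n$.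 *)

(* Defs.v *)
From HB Require Import structures.
From mathcomp Require Import all_boot all_order all_algebra all_field.
Set Implicit Arguments. Unset Strict Implicit. Unset Printing Implicit Defensive.
Import GRing.Theory.
Local Open Scope ring_scope.

(* Setting: F = F_q a finite field (q = #|F|), L = F_{q^m} a finite-dimensional
   field extension of F (m = \dim {:L}); vectors in L^n are row vectors 'rV[L]_n;
   an [n,k]_{q^m/q} code is a k-dimensional L-subspace of 'rV[L]_n. *)

Section RankMetric.
Variables (F : finFieldType) (L : fieldExtType F) (n : nat).

Definition entry_span (v : 'rV[L]_n) : {vspace L} :=
  <<[seq v ord0 i | i <- enum 'I_n]>>%VS.

Definition rank_weight (v : 'rV[L]_n) : nat := \dim (entry_span v).

(* v = u A with u the (chosen) F-basis vbasis of the entry span;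
   A i j = i-th coordinate of v_j in that basis *)
Definition supp_mx (v : 'rV[L]_n) : 'M[F]_(\dim (entry_span v), n) :=
  \matrix_(i < \dim (entry_span v), j < n) coord (vbasis (entry_span v)) i (v ord0 j).

Definition supp_sub (u v : 'rV[L]_n) : bool := (supp_mx u <= supp_mx v)%MS.

Definition minimal_codeword (C : {vspace 'rV[L]_n}) (v : 'rV[L]_n) : Prop :=
  [/\ v \in C, v != 0 &
      forall u, u \in C -> (supp_sub u v <-> exists lam : L, u = lam *: v)].

Definition minimal_code (C : {vspace 'rV[L]_n}) : Prop :=
  forall v, v \in C -> v != 0 -> minimal_codeword C v.

Definition frobv (v : 'rV[L]_n) : 'rV[L]_n := map_mx (fun x : L => x ^+ #|F|) v.

Definition galois_closed (A : {vspace 'rV[L]_n}) : Prop :=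
  forall v, v \in A -> frobv v \in A.

Definition is_gen_rank_weight (C : {vspace 'rV[L]_n}) (j d : nat) : Prop :=
  (exists A : {vspace 'rV[L]_n},
      [/\ galois_closed A, (j <= \dim (A :&: C))%N & \dim A = d]) /\
  (forall A : {vspace 'rV[L]_n},
      galois_closed A -> (j <= \dim (A :&: C))%N -> (d <= \dim A)%N).

Definition nondegenerate_code (C : {vspace 'rV[L]_n}) : Prop :=
  is_gen_rank_weight C (\dim C) n.

End RankMetric.

(* Main.v *)
From HB Require Import structures.
From mathcomp Require Import all_boot all_order all_algebra all_field.
Require Import Defs.
Set Implicit Arguments. Unset Strict Implicit. Unset Printing Implicit Defensive.
Import GRing.Theory.
Local Open Scope ring_scope.

Section Helpers.
Variables (F : finFieldType) (L : fieldExtType F).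

Local Notation q := #|F|.
Local Notation lift M := (map_mx (in_alg L) M).

Lemma q_gt0 : (0 < q)%N.
Proof. by apply/card_gt0P; exists 0. Qed.

Lemma frob0 : (0 : L) ^+ q = 0.
Proof. by rewrite expr0n eqn0Ngt q_gt0. Qed.

Lemma frobD (x y : L) : (x + y) ^+ q = x ^+ q + y ^+ q.
Proof.
have [p pr_p pF] := finPcharP F.
apply: exprDn_pchar.
have -> : q = (p ^ logn p q)%N by exact: (card_pprimeChar pF).
rewrite pnatX; apply/orP; left.
by rewrite pnatE // (pchar_lalg L).
Qed.

Lemma frob_alg (a : F) : (a%:A : L) ^+ q = a%:A.
Proof. by rewrite -[a%:A]/(in_alg L a) -rmorphXn expf_card. Qed.

Lemma frob_fixed (x : L) : x ^+ q = x -> exists a : F, x = a%:A.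
Proof.
move=> hx.
have : x \in (1%AS : {subfield L}).
  by rewrite Fermat's_little_theorem dimv1 expn1 hx.
by case/vlineP=> k ->; exists k.
Qed.

End Helpers.
Lemma submx_kerP (K : fieldType) m1 m2 n (A : 'M[K]_(m1, n)) (B : 'M[K]_(m2, n)) :
  (A <= B)%MS <-> (forall b : 'cV[K]_n, B *m b = 0 -> A *m b = 0).
Proof.
split.
  by case/submxP=> D -> b Bb; rewrite -mulmxA Bb mulmx0.
move=> H; rewrite submxE; apply/eqP/matrixP=> i j.
have := H (cokermx B *m delta_mx j 0); rewrite mulmxA mulmx_coker mul0mx.
move=> /(_ erefl) /matrixP /(_ i 0); rewrite mulmxA -colE !mxE => ->.
by [].
Qed.

Section RankLemmas.
Variables (F : finFieldType) (L : fieldExtType F) (n : nat).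
Local Notation q := #|F|.
Local Notation lift M := (map_mx (in_alg L) M).

Definition lin (v : 'rV[L]_n) (b : 'cV[F]_n) : L := \sum_j b j 0 *: v 0 j.

Lemma linE v b : v *m lift b = (lin v b)%:M.
Proof.
apply/matrixP=> i j; rewrite !ord1 !mxE /lin; apply: eq_bigr=> k _.
by rewrite !mxE mulr_algr.
Qed.

Lemma lin_mem v b : lin v b \in entry_span v.
Proof.
apply: memv_suml=> j _; apply: memvZ; apply: memv_span.
by apply/mapP; exists j; rewrite ?mem_enum.
Qed.

Lemma supp_mx_mul v b : (supp_mx v *m b == 0) = (lin v b == 0).
Proof.
have Hc i : (supp_mx v *m b) i 0 = coord (vbasis (entry_span v)) i (lin v b).
  rewrite !mxE /lin linear_sum; apply: eq_bigr=> j _.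
  by rewrite linearZ /= !mxE mulrC.
apply/eqP/eqP=> [H|H].
  rewrite (coord_vbasis (lin_mem v b)); apply: big1=> i _.
  by rewrite -Hc H mxE scale0r.
by apply/matrixP=> i j; rewrite ord1 Hc H linear0 mxE.
Qed.

Lemma supp_subP u v : supp_sub u v <->
  (forall b : 'cV[F]_n, lin v b = 0 -> lin u b = 0).
Proof.
rewrite /supp_sub; split=> [/submx_kerP H b|H].
  by move=> /eqP; rewrite -supp_mx_mul => /eqP /H /eqP; rewrite supp_mx_mul => /eqP.
apply/submx_kerP=> b.
by move=> /eqP; rewrite supp_mx_mul => /eqP /H /eqP; rewrite -supp_mx_mul => /eqP.
Qed.

Definition rowb (v : 'rV[L]_n) : 'rV[L]_(\dim (entry_span v)) :=
  \row_i (vbasis (entry_span v))`_i.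

Lemma decomp v : v = rowb v *m lift (supp_mx v).
Proof.
apply/matrixP=> i j; rewrite ord1 !mxE.
have hv : v 0 j \in entry_span v.
  by apply: memv_span; apply/mapP; exists j; rewrite ?mem_enum.
rewrite {1}(coord_vbasis hv); apply: eq_bigr=> k _.
by rewrite !mxE mulr_algr.
Qed.

Definition rowseq r (M : 'M[L]_(r, n)) : seq 'rV[L]_n :=
  [seq row i M | i <- enum 'I_r].

Lemma memRows r (M : 'M[L]_(r, n)) x :
  x \in <<rowseq M>>%VS <-> exists c : 'rV[L]_r, x = c *m M.
Proof.
split.
  move=> /coord_span ->.
  elim/big_rec: _ => [|i y _ [c ->]]; first by exists 0; rewrite mul0mx.
  have /mapP [j _ ->] : (rowseq M)`_i \in rowseq M.
    by apply: mem_nth; rewrite size_map size_enum_ord; case: i => /= i; rewrite card_ord.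
  exists (coord (rowseq M) i x *: delta_mx 0 j + c).
  by rewrite mulmxDl -scalemxAl -rowE.
case=> c ->; rewrite mulmx_sum_row; apply: memv_suml=> i _; apply: memvZ.
by apply: memv_span; apply/mapP; exists i; rewrite ?mem_enum.
Qed.

Lemma dim_rows r (M : 'M[L]_(r, n)) : (\dim <<rowseq M>> <= r)%N.
Proof. by rewrite (leq_trans (dim_span _)) // size_map size_enum_ord. Qed.

Lemma frobv_lift r (c : 'rV[L]_r) (S : 'M[F]_(r, n)) :
  frobv (c *m lift S) = frobv c *m lift S.
Proof.
apply/matrixP=> i j; rewrite !mxE.
rewrite (big_morph (fun x : L => x ^+ q) (@frobD F L) (@frob0 F L)).
by apply: eq_bigr=> k _; rewrite !mxE exprMn frob_alg.
Qed.

Lemma galois_rows r (S : 'M[F]_(r, n)) : galois_closed <<rowseq (lift S)>>%VS.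
Proof.
move=> w /memRows [c ->]; apply/memRows; exists (frobv c); exact: frobv_lift.
Qed.

Definition vmx (A : {vspace 'rV[L]_n}) : 'M[L]_(\dim A, n) :=
  \matrix_(i < \dim A) (vbasis A)`_i.

Lemma mem_vmx (A : {vspace 'rV[L]_n}) (x : 'rV[L]_n) : x \in A <-> (x <= vmx A)%MS.
Proof.
split=> [xA|].
  apply/submxP; exists (\row_i coord (vbasis A) i x).
  rewrite mulmx_sum_row {1}(coord_vbasis xA); apply: eq_bigr=> i _.
  by rewrite rowK mxE.
case/submxP=> c ->; rewrite mulmx_sum_row; apply: memv_suml=> i _; apply: memvZ.
by rewrite rowK; apply: vbasis_mem; rewrite mem_nth // size_tuple.
Qed.

Definition fpart (x : L) : F := odflt 0 [pick a : F | a%:A == x].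

Lemma fpartK x : (exists a : F, x = a%:A) -> (fpart x)%:A = x.
Proof.
case=> a ->; rewrite /fpart; case: pickP => [b /eqP -> //|/(_ a)].
by rewrite eqxx.
Qed.

Lemma descent (A : {vspace 'rV[L]_n}) : galois_closed A ->
  exists r, exists S : 'M[F]_(r, n), (r <= \dim A)%N /\
    forall x, x \in A -> exists c : 'rV[L]_r, x = c *m lift S.
Proof.
move=> gA.
set MA := vmx A; set r := \rank MA.
pose B := row_base MA.
have eqB : (B :=: MA)%MS := eq_row_base MA.
have fullBt : row_full (B^T) by rewrite /row_full mxrank_tr eqB.
pose f := fullrankfun fullBt.
have uP : rowsub f B^T \in unitmx := fullrowsub_unit fullBt.
pose Q := (rowsub f B^T)^T.
have uQ : Q \in unitmx by rewrite unitmx_tr.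
pose W := invmx Q *m B.
have colW i j : W i (f j) = (i == j)%:R.
  have := congr1 (fun M : 'M[L]_r => M i j) (mulVmx uQ).
  rewrite !mxE => <-; apply: eq_bigr=> k _; rewrite !mxE.
  by [].
have WB : (W <= B)%MS by apply: submxMl.
have BW : (B <= W)%MS by apply/submxP; exists Q; rewrite /W mulKVmx.
have inW x : x \in A -> (x <= W)%MS.
  by move=> /mem_vmx xM; apply: submx_trans BW; rewrite eqB.
have Win i : row i W \in A.
  by apply/mem_vmx; rewrite -/MA -eqB (submx_trans (row_sub i W) WB).
pose FW := map_mx (fun x : L => x ^+ q) W.
have FWW : (FW <= W)%MS.
  apply/row_subP=> i; rewrite /FW -map_row; apply: inW; exact: gA.
case/submxP: FWW => X defX.
have X1 : X = 1%:M.
  apply/matrixP=> i j.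
  have := congr1 (fun M : 'M[L]_(r, n) => M i (f j)) defX.
  rewrite [in LHS]mxE colW.
  rewrite mxE (bigD1 j) //= colW eqxx mulr1 big1 ?addr0 => [H|k kj]; last first.
    by rewrite colW (negbTE kj) mulr0.
  rewrite -H mxE; case: (i == j); first by rewrite expr1n.
  by rewrite frob0.
rewrite X1 mul1mx in defX.
pose S := \matrix_(i, j) fpart (W i j).
have liftS : lift S = W.
  apply/matrixP=> i j; rewrite 2!mxE in_algE; apply: fpartK; apply: frob_fixed.
  by have := congr1 (fun M : 'M[L]_(r, n) => M i j) defX; rewrite mxE.
exists r, S; split; first exact: rank_leq_row.
by move=> x /inW /submxP [c ->]; exists c; rewrite liftS.
Qed.

Lemma lin_eq0 v b : lin v b = 0 <-> v *m lift b = 0.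
Proof.
rewrite linE; split=> [->|/matrixP/(_ 0 0)].
  by apply/matrixP=> i j; rewrite !mxE mul0rn.
by rewrite !mxE mulr1n.
Qed.

End RankLemmas.

Section Counting.
Variables (F : finFieldType) (L : fieldExtType F).
Local Notation q := #|F|.
Local Notation lift M := (map_mx (in_alg L) M).

Lemma counting r (c1 c2 : 'rV[L]_r) : (r <= \dim (fullv : {vspace L}))%N ->
  exists x : L, forall a : 'cV[F]_r,
    (c1 + x *: c2) *m lift a = 0 -> c2 *m lift a = 0.
Proof.
move=> hr.
pose e := vbasis (fullv : {vspace L}).
pose g (t : 'rV[F]_(\dim (fullv : {vspace L}))) : L := \sum_i t 0 i *: e`_i.
have g_inj : injective g.
  move=> t1 t2 H; apply/matrixP=> i j; rewrite ord1.
  have := congr1 (coord e j) H.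
  by rewrite !coord_sum_free // (basis_free (vbasisP _)).
pose y (c : 'rV[L]_r) (a : 'cV[F]_r) : L := (c *m lift a) 0 0.
pose h a : option L := if y c2 a == 0 then None else Some (- y c1 a / y c2 a).
pose im := [seq h a | a <- enum {: 'cV[F]_r}].
pose cand := None :: [seq Some (g t) | t <- enum {: 'rV[F]_(\dim (fullv : {vspace L}))}].
have ucand : uniq cand.
  rewrite /cand cons_uniq; apply/andP; split.
    by apply/mapP=> -[t _].
  rewrite map_inj_uniq ?enum_uniq //.
  by move=> t1 t2 [] /g_inj.
case: (boolP (all (mem im) cand)) => [/allP sub | /allPn [o oc oim]].
  have := uniq_leq_size ucand sub.
  rewrite /cand /im /= !size_map -!enumT -!cardT !card_mx !muln1 ltnNge.
  by rewrite mul1n leq_pexp2l //; apply: q_gt0.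
case: o oc oim => [x|]; last first.
  move=> _; case/negP; apply/mapP; exists 0; first by rewrite mem_enum.
  by rewrite /h /y map_mx0 mulmx0 mxE eqxx.
move=> _ xim; exists x => a H.
have Hy : y c1 a + x * y c2 a = 0.
  by move: H => /matrixP /(_ 0 0); rewrite mulmxDl -scalemxAl /y !mxE.
have y20 : y c2 a = 0.
  case: (boolP (y c2 a == 0)) => [/eqP //|y2n]; case/negP: xim; apply/mapP; exists a.
    by rewrite mem_enum.
  rewrite /h (negbTE y2n); congr Some.
  apply: (mulIf y2n); rewrite divfK //.
  by apply/eqP; rewrite -addr_eq0 addrC Hy.
by apply/matrixP=> i j; rewrite !ord1 [RHS]mxE; exact: y20.
Qed.

Lemma two_vecs (n : nat) (U : {vspace 'rV[L]_n}) : (2 <= \dim U)%N ->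
  exists v1 v2, [/\ v1 \in U, v2 \in U, v2 != 0 & v1 \notin <[v2]>%VS].
Proof.
move=> hU.
have h0 : (0 < \dim U)%N by apply: leq_trans hU.
pose i0 := Ordinal h0; pose i1 := Ordinal hU.
pose X := vbasis U.
have fX : free X := basis_free (vbasisP U).
have inU (i : 'I_(\dim U)) : X`_i \in U.
  by apply: vbasis_mem; rewrite mem_nth // size_tuple.
exists X`_i0, X`_i1; split; rewrite ?inU //.
  apply/eqP=> h; have := coord_free i1 i1 fX; rewrite h linear0 eqxx.
  by move/eqP; rewrite eq_sym oner_eq0.
apply/vlineP=> -[k hk].
have e : coord X i0 X`_i0 = k * coord X i0 X`_i1 by rewrite {1}hk linearZ.
move: e; rewrite (coord_free i1 i0 fX) (coord_free i0 i0 fX) eqxx /=.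
by rewrite mulr0 => /eqP; rewrite oner_eq0.
Qed.

End Counting.

Theorem theorem3p4 (F : finFieldType) (L : fieldExtType F) (m n k : nat)
  (C : {vspace 'rV[L]_n}) :
  dimv (fullv : {vspace L}) = m -> (0 < m)%N -> (0 < n)%N -> (2 <= k)%N ->
  dimv C = k -> nondegenerate_code C ->
  forall d2 : nat, is_gen_rank_weight C 2 d2 ->
  (minimal_code C <-> (m.+1 <= d2)%N).
Proof.
move=> hm m0 n0 k2 hk nd d2 [[A0 [gA0 hA0 dA0]] hmin].
split.
- move=> minC; rewrite ltnNge; apply/negP=> hd2.
  have [v1 [v2 [v1A v2A v2n0 v1n]]] := two_vecs hA0.
  have [r [S [hr hS]]] := descent gA0.
  move: v1A v2A; rewrite !memv_cap => /andP [v1A0 v1C] /andP [v2A0 v2C].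
  have [c1 e1] := hS _ v1A0; have [c2 e2] := hS _ v2A0.
  have hrL : (r <= \dim (fullv : {vspace L}))%N.
    by rewrite hm (leq_trans hr) // dA0.
  have [x hx] := counting c1 c2 hrL.
  pose v := v1 + x *: v2.
  have vC : v \in C by rewrite memvD // memvZ.
  have vn0 : v != 0.
    apply/eqP=> h; case/vlineP: v1n; exists (- x).
    by apply/eqP; rewrite scaleNr -addr_eq0 -/v h.
  have [_ _ hv] := minC v vC vn0.
  have hsub : supp_sub v2 v.
    apply/supp_subP=> b /lin_eq0 hb; apply/lin_eq0.
    rewrite e2 -mulmxA -map_mxM; apply: hx.
    by rewrite map_mxM mulmxA mulmxDl -scalemxAl -e1 -e2 -/v.
  have [lam elam] := (iffLR (hv v2 v2C)) hsub.
  have hlam : lam *: v1 = (1 - lam * x) *: v2.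
    by rewrite scalerBl scale1r {1}elam /v scalerDr scalerA addrK.
  case: (eqVneq lam 0) => [l0|ln0].
    by move: elam; rewrite l0 scale0r => /eqP; rewrite (negbTE v2n0).
  case/vlineP: v1n; exists (lam^-1 * (1 - lam * x)).
  by rewrite -scalerA -hlam scalerA mulVf // scale1r.
- move=> hd2 v vC vn0; split=> // u uC; split.
  + move=> hsub; case: (boolP (u \in <[v]>%VS)) => [/vlineP // | un].
    exfalso.
    pose S := supp_mx v.
    pose A := <<rowseq (map_mx (in_alg L) S)>>%VS.
    have gA : galois_closed A := galois_rows (S := S).
    have vA : v \in A by apply/memRows; exists (rowb v); exact: decomp.
    have uA : u \in A.
      case/submxP: hsub => D eD; apply/memRows.
      exists (rowb u *m map_mx (in_alg L) D).
      by rewrite -mulmxA -map_mxM -eD -decomp.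
    have h2 : (2 <= \dim (A :&: C))%N.
      have fr : free [:: u; v].
        by rewrite free_cons span_seq1 un seq1_free vn0.
      move/eqP: fr => /= <-; apply: dimvS; apply/span_subvP=> w.
      by rewrite !inE => /orP [] /eqP ->; rewrite memv_cap ?uA ?vA ?uC ?vC.
    have := hmin A gA h2.
    have : (\dim A <= m)%N.
      apply: (leq_trans (dim_rows _)); rewrite -hm; exact: dimvS (subvf _).
    move=> h1 h3; have := leq_trans h3 h1; rewrite leqNgt.
    by rewrite (leq_trans (ltnSn m) hd2).
  + case=> lam ->; apply/supp_subP=> b /lin_eq0 hb; apply/lin_eq0.
    by rewrite -scalemxAl hb scaler0.
Qed.
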